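(* Consider the ring $S=\mathbb{F}_{p^m}[x]/\langle x^{4p^s}-\alpha\rangle$. Then: (a) $S$ has exactly two maximal ideals, $\langle x^2+\gamma x+\frac{\gamma^2}{2}\rangle$ and $\langle x^2-\gamma x+\frac{\gamma^2}{2}\rangle$; (b) the ideals of $S$ are exactly $\left\langle \left(x^2+\gamma x+\frac{\gamma^2}{2}\right)^i\left(x^2-\gamma x+\frac{\gamma^2}{2}\right)^j\right\rangle$ with $0\le i,j\le p^s$, and such an ideal has $p^{m(4p^s-2i-2j)}$ elements; (c) the set of nilpotent elements of $S$ is $\langle x^4-\alpha_0\rangle$; (d) the set of non-units of $S$ is $\langle x^2+\gamma x+\frac{\gamma^2}{2}\rangle\cup\langle x^2-\gamma x+\frac{\gamma^2}{2}\rangle$.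
   Context: Let $p$ be an odd prime and $m,s$ positive integers with $p^m\equiv 3\pmod 4$; $\mathbb{F}_{p^m}$ is the field with $p^m$ elements. Fix $\alpha\in\mathbb{F}_{p^m}\setminus\{0\}$ that is not a square in $\mathbb{F}_{p^m}$, let $\alpha_0\in\mathbb{F}_{p^m}$ satisfy $\alpha_0^{p^s}=\alpha$, and let $\gamma\in\mathbb{F}_{p^m}$ satisfy $\gamma^4+4\alpha_0=0$. *)

(* Defs.v *)
From HB Require Import structures.
From mathcomp Require Import all_boot all_order all_algebra.
From mathcomp Require Import qpoly.
Set Implicit Arguments. Unset Strict Implicit. Unset Printing Implicit Defensive.
Import Order.TTheory GRing.Theory Num.Theory.
Local Open Scope ring_scope.

(* An ideal of a finite commutative ring R, as a subset of R
   (the whole ring is allowed; cf. ring_quotient.idealr_closed which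
   additionally requires properness). *)
Definition is_ideal (R : finComNzRingType) (I : {set R}) : Prop :=
  0 \in I /\ forall a u v, u \in I -> v \in I -> a * u + v \in I.

Definition is_maximal_ideal (R : finComNzRingType) (I : {set R}) : Prop :=
  is_ideal I /\ 1 \notin I /\
  forall J : {set R}, is_ideal J -> I \subset J -> J = I \/ J = [set: R].

(* {poly %/ h} is definitionally {poly_n R}, which is finite over a
   finite ring; expose the finite structure on the quotient ring. *)
Definition fqpoly (F : finFieldType) (h : {poly F}) := {poly %/ h}.
HB.instance Definition _ (F : finFieldType) (h : {poly F}) :=
  GRing.ComUnitAlgebra.on (fqpoly h).
HB.instance Definition _ (F : finFieldType) (h : {poly F}) :=
  Finite.on (fqpoly h).

Definition pideal (R : finComNzRingType) (a : R) : {set R} :=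
  [set a * r | r : R].

Definition nilpotent (R : nzRingType) (x : R) : Prop :=
  exists n : nat, x ^+ n = 0.

Definition modpoly (F : fieldType) (p s : nat) (alpha : F) : {poly F} :=
  'X^(4 * p ^ s) - alpha%:P.

(* Main.v *)
Require Import Defs.
From HB Require Import structures.
From mathcomp Require Import all_boot all_order all_algebra.
From mathcomp Require Import qpoly.
From mathcomp Require Import zify.
Import Order.TTheory GRing.Theory Num.Theory.
Local Open Scope ring_scope.
Set Implicit Arguments. Unset Strict Implicit. Unset Printing Implicit Defensive.

Lemma nat1 a b c : (0 < a)%N -> (1 < c)%N -> (a <= c)%N -> (b <= c - a)%N -> ((a + b).-1 < c)%N.
Proof. lia. Qed.
Lemma nat2 a b c : (0 < a)%N -> (b < c)%N -> (b - a.-1 <= c - a)%N.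
Proof. lia. Qed.

Section Gen.
Variable F : finFieldType.
Variable f : {poly F}.
Hypothesis fM : f \is monic.
Hypothesis sf : (1 < size f)%N.
Local Notation S := (fqpoly f).

Lemma mkE : mk_monic f = f.
Proof. by rewrite /mk_monic sf fM. Qed.

Lemma f_neq0 : f != 0.
Proof. by rewrite -size_poly_gt0 (ltn_trans _ sf). Qed.

Lemma val_in (q : {poly F}) : val (in_qpoly f q : S) = q %% f.
Proof. by rewrite /= mkE Pdiv.IdomainMonic.modpE. Qed.

Lemma val_size (z : S) : (size (val z) < size f)%N.
Proof. have e : size (mk_monic f) = size f by rewrite mkE.
by rewrite -e; exact: size_mk_monic. Qed.

Lemma val_mul (a b : S) : val (a * b) = (val a * val b) %% f.
Proof. by rewrite -val_in. Qed.

Lemma in_val (z : S) : in_qpoly f (val z) = z.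
Proof. by apply: val_inj; rewrite val_in modp_small // val_size. Qed.

Lemma in_qpolyM' (a b : {poly F}) : (in_qpoly f (a * b) : S) = in_qpoly f a * in_qpoly f b.
Proof. exact: in_qpolyM. Qed.

Lemma L1 d : d %| f -> forall z : S, (z \in pideal (in_qpoly f d : S)) = (d %| val z).
Proof.
move=> df z; apply/imsetP/idP.
  case=> r _ ->; rewrite val_mul -dvdp_mod // val_in.
  by apply: dvdp_mulr; rewrite -dvdp_mod.
move=> dz; exists (in_qpoly f (val z %/ d)) => //.
by rewrite -in_qpolyM' mulrC divpK // in_val.
Qed.

Lemma pideal_ideal (x : S) : is_ideal (pideal x).
Proof.
split; first by apply/imsetP; exists 0; rewrite ?mulr0.
move=> a u v /imsetP[r _ ->] /imsetP[r' _ ->].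
by apply/imsetP; exists (a * r + r') => //; rewrite mulrDr mulrCA.
Qed.

Lemma unitE (z : S) : (z \is a GRing.unit) = coprimep f (val z).
Proof.
have e : forall x, coprimep (mk_monic f) x = coprimep f x by move=> x; rewrite mkE.
rewrite -e.
apply/unitrP/idP.
  by case=> y [h1 _]; apply: (qpoly_intro_unit h1).
by move=> c; exists (qpoly_inv z); rewrite qpoly_mulVz ?qpoly_mulzV.
Qed.


Lemma in_f : (in_qpoly f f : S) = 0.
Proof. by apply: val_inj; rewrite val_in modpp. Qed.

Lemma ideal_principal (I : {set S}) : is_ideal I ->
  exists d, d %| f /\ I = pideal (in_qpoly f d : S).
Proof.
case=> I0 Icl.
case: (boolP [exists z, (z \in I) && (z != 0)]) => [/existsP[z0 Pz0]|].
  case: (@arg_minnP S z0 (fun z => (z \in I) && (z != 0)) (fun z => size (val z)) Pz0)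
    => z /andP[zI z0'] zmin.
  set d := val z.
  have dn0 : d != 0 by apply: contra z0' => /eqP h; apply/eqP/val_inj.
  have key : forall y, (in_qpoly f y : S) \in I -> d %| y.
    move=> y yI.
    have wI : (in_qpoly f (y %% d) : S) \in I.
      have -> : (in_qpoly f (y %% d) : S) = (- in_qpoly f (y %/ d)) * z + in_qpoly f y.
        rewrite {3}(divp_eq y d) in_qpolyD in_qpolyM' in_val mulNr addrA.
        by rewrite addNr add0r.
      exact: Icl.
    apply/modp_eq0P/eqP; apply: contraT => ne.
    have sd : (size (y %% d)%R < size f)%N.
      by apply: (ltn_trans _ (val_size z)); rewrite ltn_modp.
    have w0 : (in_qpoly f (y %% d) : S) != 0.
      by apply: contra ne => /eqP/(congr1 val); rewrite val_in modp_small // => ->.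
    have := zmin (in_qpoly f (y %% d)) (introT andP (conj wI w0)).
    by rewrite val_in (modp_small sd) leqNgt -/d ltn_modp dn0.
  have df : d %| f by apply: key; rewrite in_f.
  exists d; split => //.
  apply/setP => y; rewrite L1 //.
  apply/idP/idP; first by move=> yI; apply: key; rewrite in_val.
  move=> dy; have -> : y = in_qpoly f (val y %/ d) * z + 0.
    by rewrite addr0 -(in_val z) -in_qpolyM' divpK // in_val.
  exact: Icl.
rewrite negb_exists => /forallP H.
exists f; split; first exact: dvdpp.
apply/setP => y; rewrite L1 ?dvdpp //.
apply/idP/idP => [yI|fy].
  by have := H y; rewrite yI /= negbK => /eqP ->; rewrite dvdp0.
suff -> : y = 0 by [].
apply: val_inj => /=; apply/eqP; apply: contraT => yn0.
by have := dvdp_leq yn0 fy; rewrite leqNgt val_size.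
Qed.

Lemma card_pideal d : d %| f -> #|pideal (in_qpoly f d : S)| = (#|F| ^ (size f - size d))%N.
Proof.
move=> df.
have dn0 : d != 0 by apply: contraTneq df => ->; rewrite dvd0p f_neq0.
have sdf : (size d <= size f)%N := dvdp_leq f_neq0 df.
have sd0 : (0 < size d)%N by rewrite size_poly_gt0.
set n := (size f - size d)%N.
pose phi (k : {poly_n F}) : S := in_qpoly f (d * val k).
have sk : forall k : {poly_n F}, (size (d * val k)%R < size f)%N.
  move=> k; apply: leq_ltn_trans (size_mul_leq _ _) _; have := size_npoly k.
  by move=> h; apply: nat1.
have phi_inj : injective phi.
  move=> k1 k2 /(congr1 val); rewrite !val_in !modp_small // => /(mulfI dn0) h.
  exact: val_inj.
have -> : pideal (in_qpoly f d : S) = phi @: [set: {poly_n F}].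
  apply/setP => z; rewrite L1 //; apply/idP/imsetP.
    move=> dz; have sq : (size (val z %/ d)%R <= n)%N.
      by rewrite size_divp // /n; apply: nat2 => //; apply: val_size.
    exists (npolyp n (val z %/ d)) => //; apply: val_inj.
    rewrite val_in; have -> : val (npolyp n (val z %/ d)) = val z %/ d by exact: npolypK.
    by rewrite divpKC // modp_small // val_size.
  by case=> k _ ->; rewrite val_in modp_small //; exact: dvdp_mulIl.
by rewrite card_imset // cardsT card_npoly.
Qed.

Lemma pideal_sub d e : d %| f -> e %| f ->
  (pideal (in_qpoly f d : S) \subset pideal (in_qpoly f e : S)) = (e %| d).
Proof.
move=> df ef; apply/subsetP/idP.
  move=> H; have := H (in_qpoly f d); rewrite !L1 // val_in -!(dvdp_mod _ df).
  by rewrite -(dvdp_mod _ ef) dvdpp; apply.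
by move=> ed z; rewrite !L1 // => /(dvdp_trans ed).
Qed.

End Gen.

Section PolyGen.
Variable F : fieldType.
Implicit Types (h d g : {poly F}).

Lemma DL1 h (hi : irreducible_poly h) a : forall d g, d %| h ^+ a * g ->
  exists2 i, (i <= a)%N & exists e, e %| g /\ d %= h ^+ i * e.
Proof.
have hn0 : h != 0 by case: hi => s _; rewrite -size_poly_gt0 (ltn_trans _ s).
elim: a => [|a IH] d g.
  by rewrite expr0 mul1r => dg; exists 0%N => //; exists d; rewrite expr0 mul1r eqpxx.
rewrite exprS -mulrA => dh.
case: (boolP (coprimep h d)) => [c|].
  have : d %| h ^+ a * g by rewrite -(Gauss_dvdpr _ (_ : coprimep d h)) // coprimep_sym.
  by case/IH => i ia [e [eg de]]; exists i => //; [apply: leqW | exists e].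
rewrite irreducible_poly_coprime // negbK => hd.
have : (d %/ h) * h %| (h ^+ a * g) * h by rewrite divpK // mulrC.
rewrite dvdp_mul2r // => /IH [i ia [e [eg de]]].
exists i.+1 => //; exists e; split => //.
rewrite -(divpK hd) exprS -mulrA [h * _]mulrC.
exact: eqp_mulr.
Qed.

Lemma irr_dvd_exp h x n : irreducible_poly h -> h %| x ^+ n -> h %| x.
Proof.
move=> hi hx; apply: contraT => nhx.
have c : coprimep h x by rewrite irreducible_poly_coprime.
have c' := coprimep_expr n c.
have : h %| 1 * x ^+ n by rewrite mul1r.
rewrite Gauss_dvdpl // dvdp1 => /eqP e.
by case: hi; rewrite e.
Qed.

Lemma size_expP h n : size h = 3 -> size (h ^+ n) = (2 * n).+1.
Proof.
move=> sh; have := size_exp h n; rewrite sh /= => e.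
by rewrite -e prednK // size_poly_gt0 expf_neq0 // -size_poly_gt0 sh.
Qed.

Lemma exp_dvd h i k : size h = 3 -> h ^+ i %| h ^+ k -> (i <= k)%N.
Proof.
move=> sh hd.
have hn0 : h ^+ k != 0 by rewrite -size_poly_gt0 size_expP.
have := dvdp_leq hn0 hd; rewrite !size_expP //; lia.
Qed.

End PolyGen.

From mathcomp Require Import all_field.
From mathcomp Require Import ring.

Section Spec.
Variable F : finFieldType.
Variables p m s : nat.
Variables alpha alpha0 gamma : F.
Hypotheses (pp : prime p) (po : odd p) (sp : (0 < s)%N) (cF : #|F| = (p ^ m)%N)
  (cm : (p ^ m %% 4 = 3)%N) (an0 : alpha != 0)
  (a0 : alpha0 ^+ (p ^ s) = alpha) (gh : gamma ^+ 4 + 4%:R * alpha0 = 0).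

Definition hh (u : F) : {poly F} := 'X^2 + u *: 'X + (u ^+ 2 / 2%:R)%:P.

Lemma charF : p \in [pchar F].
Proof. exact: card_finPcharP cF pp. Qed.

Lemma two_n0 : (2%:R : F) != 0.
Proof.
apply/negP => /eqP h; have := dvdn_pcharf charF 2; rewrite h eqxx.
by rewrite dvdn_prime2 // => /eqP e; move: po; rewrite e.
Qed.

Lemma four_n0 : (4%:R : F) != 0.
Proof. by rewrite (natrM F 2 2) mulf_neq0 // two_n0. Qed.

Lemma Npos : (0 < p ^ s)%N.
Proof. by rewrite expn_gt0 prime_gt0. Qed.

Lemma gamma_n0 : gamma != 0.
Proof.
apply: contra an0 => /eqP g0; move: gh; rewrite g0 expr0n /= add0r => /eqP.
rewrite mulf_eq0 (negPf four_n0) /= => /eqP e.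
by rewrite -a0 e expr0n gtn_eqF // Npos.
Qed.

Lemma no_sqrt_m1 (b : F) : b ^+ 2 != -1.
Proof.
apply/eqP => bE.
have ck : #|F| = (2 * (2 * (p ^ m %/ 4)).+1).+1.
  rewrite cF {1}(divn_eq (p ^ m) 4) cm; lia.
have := expf_card b; rewrite ck exprS exprM bE exprS exprM sqrrN expr1n expr1n mulr1.
rewrite mulrN1 => /eqP; rewrite eq_sym -addr_eq0 -mulr2n -mulr_natl mulf_eq0.
rewrite (negPf two_n0) /= => /eqP b0.
by move: bE; rewrite b0 expr0n /= => /eqP; rewrite eq_sym oppr_eq0 oner_eq0.
Qed.

Lemma hh_noroot u x : u != 0 -> ~~ root (hh u) x.
Proof.
move=> un0; apply/negP; rewrite /root /hh !hornerE /= => /eqP H.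
have E : (2%:R * x + u) ^+ 2 = 4%:R * (x ^+ 2 + u * x + u ^+ 2 / 2%:R) - u ^+ 2.
  by field; rewrite two_n0.
rewrite H mulr0 sub0r in E.
apply: (negP (no_sqrt_m1 ((2%:R * x + u) / u))); apply/eqP.
by rewrite expr_div_n E mulNr divff // expf_neq0.
Qed.

Lemma size_hh u : size (hh u) = 3%N.
Proof.
rewrite /hh -addrA size_addl ?size_polyXn //.
apply: leq_ltn_trans (size_polyD _ _) _; rewrite gtn_max.
apply/andP; split.
  by apply: leq_ltn_trans (size_scale_leq _ _) _; rewrite size_polyX.
by apply: leq_ltn_trans (size_polyC_leq1 _) _.
Qed.

Lemma irr_hh u : u != 0 -> irreducible_poly (hh u).
Proof.
move=> un0; apply: cubic_irreducible; first by rewrite size_hh.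
by move=> x; apply: hh_noroot.
Qed.

Lemma c2E : (gamma ^+ 2 / 2%:R) ^+ 2 = - alpha0.
Proof.
have g4 : gamma ^+ 4 = - (4%:R * alpha0) by apply/eqP; rewrite -addr_eq0 gh.
have -> : (gamma ^+ 2 / 2%:R) ^+ 2 = gamma ^+ 4 / 4%:R by field; rewrite four_n0 two_n0.
by rewrite g4 mulNr mulrAC divff ?mul1r // four_n0.
Qed.

Lemma h12 : hh gamma * hh (- gamma) = 'X^4 - alpha0%:P.
Proof.
rewrite /hh sqrrN -!mul_polyC polyCN.
set C := (gamma ^+ 2 / 2%:R)%:P; set G := gamma%:P.
have e1 : C * 2%:R - G ^+ 2 = 0.
  rewrite -polyC_natr -polyCM -rmorphXn -polyCB /=; congr (_ %:P).
  by field; rewrite two_n0.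
have e2 : C ^+ 2 = - alpha0%:P by rewrite -rmorphXn /= c2E polyCN.
transitivity ('X^4 + (C * 2%:R - G ^+ 2) * 'X^2 + C ^+ 2); first by ring.
by rewrite e1 e2 mul0r addr0.
Qed.

Lemma pnatN : ([pchar {poly F}]).-nat (p ^ s)%N.
Proof. by rewrite (eq_pnat _ (@pchar_poly F)) pnatX pnatE // charF. Qed.

Lemma frob : ('X^4 - alpha0%:P) ^+ (p ^ s) = modpoly p s alpha.
Proof.
rewrite /modpoly exprDn_pchar ?pnatN // exprNn_pchar ?pnatN //.
by rewrite -exprM -rmorphXn /= a0.
Qed.

Lemma f_size : size (modpoly p s alpha) = (4 * p ^ s).+1.
Proof. by rewrite /modpoly size_XnsubC // muln_gt0 Npos. Qed.

Lemma f_monic : modpoly p s alpha \is monic.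
Proof. by rewrite /modpoly monicXnsubC // muln_gt0 Npos. Qed.

Lemma f_size1 : (1 < size (modpoly p s alpha))%N.
Proof. by rewrite f_size ltnS muln_gt0 Npos. Qed.

Lemma cop12 : coprimep (hh gamma) (hh (- gamma)).
Proof.
rewrite irreducible_poly_coprime; last exact: irr_hh gamma_n0.
apply/negP => hd.
have e : hh gamma - hh (- gamma) = (gamma + gamma)%:P * 'X.
  rewrite /hh sqrrN -!mul_polyC polyCN polyCD; ring.
have gg : gamma + gamma != 0 by rewrite -mulr2n -mulr_natl mulf_neq0 ?two_n0 ?gamma_n0.
have hd2 : hh gamma %| hh gamma - hh (- gamma) by rewrite dvdp_sub.
have hz : (gamma + gamma)%:P * 'X != 0 by rewrite mulf_neq0 ?polyC_eq0 ?polyX_eq0.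
rewrite e in hd2; have := dvdp_leq hz hd2.
by rewrite size_hh mul_polyC size_scale // size_polyX.
Qed.

Local Notation N := (p ^ s)%N.
Definition H i j := hh gamma ^+ i * hh (- gamma) ^+ j.

Lemma hh_n0 u : hh u != 0.
Proof. by rewrite -size_poly_gt0 size_hh. Qed.

Lemma H_n0 i j : H i j != 0.
Proof. by rewrite mulf_neq0 // expf_neq0 // hh_n0. Qed.

Lemma sizeH i j : size (H i j) = (2 * (i + j)).+1.
Proof.
rewrite /H size_mul ?expf_neq0 ?hh_n0 // !size_expP ?size_hh //; lia.
Qed.

Lemma fE : modpoly p s alpha = H N N.
Proof. by rewrite /H -exprMn h12 frob. Qed.

Lemma Hdvd i j k l : (H i j %| H k l) = (i <= k)%N && (j <= l)%N.
Proof.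
apply/idP/andP; last by case=> ik jl; apply: dvdp_mul; apply: dvdp_exp2l.
move=> hd; split.
  have : hh gamma ^+ i %| hh gamma ^+ k * hh (- gamma) ^+ l.
    by apply: dvdp_trans hd; apply: dvdp_mulr.
  rewrite Gauss_dvdpl; first by move/exp_dvd; apply; apply: size_hh.
  by apply: coprimep_expl; apply: coprimep_expr; apply: cop12.
have : hh (- gamma) ^+ j %| hh gamma ^+ k * hh (- gamma) ^+ l.
  by apply: dvdp_trans hd; apply: dvdp_mull.
rewrite Gauss_dvdpr; first by move/exp_dvd; apply; apply: size_hh.
by apply: coprimep_expl; apply: coprimep_expr; rewrite coprimep_sym; apply: cop12.
Qed.

Lemma HdvdF i j : (i <= N)%N -> (j <= N)%N -> H i j %| modpoly p s alpha.
Proof. by move=> iN jN; rewrite fE Hdvd iN jN. Qed.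

Local Notation f := (modpoly p s alpha).
Local Notation S := (fqpoly f).
Definition P i j : {set S} := pideal (in_qpoly f (H i j) : S).

Lemma in_exp (x : {poly F}) n : (in_qpoly f (x ^+ n) : S) = (in_qpoly f x) ^+ n.
Proof.
elim: n => [|n IH]; first by rewrite !expr0 in_qpoly1.
by rewrite !exprS in_qpolyM' IH.
Qed.

Lemma gE i j : (in_qpoly f (hh gamma) : S) ^+ i * in_qpoly f (hh (- gamma)) ^+ j
  = in_qpoly f (H i j).
Proof. by rewrite -!in_exp -in_qpolyM'. Qed.

Lemma Psub i j k l : (i <= N)%N -> (j <= N)%N -> (k <= N)%N -> (l <= N)%N ->
  (P i j \subset P k l) = (k <= i)%N && (l <= j)%N.
Proof.
by move=> *; rewrite /P (pideal_sub f_monic f_size1) ?HdvdF // Hdvd.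
Qed.

Lemma memP i j k l : (i <= N)%N -> (j <= N)%N ->
  (in_qpoly f (H k l) \in P i j) = (i <= k)%N && (j <= l)%N.
Proof.
move=> iN jN; rewrite /P (L1 f_monic f_size1) ?HdvdF // val_in ?f_monic ?f_size1 //.
by rewrite -(dvdp_mod _ (HdvdF iN jN)) Hdvd.
Qed.

Lemma P00 : P 0 0 = setT.
Proof.
rewrite /P /H !expr0 mulr1 in_qpoly1; apply/setP => z; rewrite inE.
by apply/imsetP; exists z; rewrite ?mul1r.
Qed.

Lemma idealP (I : {set S}) : is_ideal I <->
  exists i j, [/\ (i <= N)%N, (j <= N)%N & I = P i j].
Proof.
split; last by case=> i [j [_ _ ->]]; apply: pideal_ideal.
move=> /(ideal_principal f_monic f_size1) [d [df ->]].
have df' : d %| hh gamma ^+ N * hh (- gamma) ^+ N by rewrite -/(H N N) -fE.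
case: (DL1 (irr_hh gamma_n0) df') => i iN [e [eN de]].
have : e %| hh (- gamma) ^+ N * 1 by rewrite mulr1.
have gn : - gamma != 0 by rewrite oppr_eq0 gamma_n0.
case/(DL1 (irr_hh gn)) => j jN [e' [e'1 ee']].
have e'1' : e' %= 1 by rewrite -size_poly_eq1 -dvdp1.
have dH : d %= H i j.
  apply: eqp_trans de _; rewrite /H; apply: eqp_mull.
  apply: eqp_trans ee' _; rewrite -{2}[hh (- gamma) ^+ j]mulr1; exact: eqp_mull.
exists i, j; split => //.
apply/eqP; rewrite eqEsubset /P !(pideal_sub f_monic f_size1) ?HdvdF //.
by rewrite (eqp_dvdl _ dH) dvdpp (eqp_dvdr _ dH) dvdpp.
Qed.

Lemma H10 : H 1 0 = hh gamma. Proof. by rewrite /H expr1 expr0 mulr1. Qed.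
Lemma H01 : H 0 1 = hh (- gamma). Proof. by rewrite /H expr1 expr0 mul1r. Qed.
Lemma H11 : H 1 1 = 'X^4 - alpha0%:P. Proof. by rewrite /H !expr1 h12. Qed.
Lemma one_H : (1 : S) = in_qpoly f (H 0 0).
Proof. by rewrite /H !expr0 mulr1 in_qpoly1. Qed.

Lemma N1 : (1 <= N)%N. Proof. exact: Npos. Qed.

Lemma P_neq : P 1 0 != P 0 1.
Proof.
apply/negP => /eqP e; have := subxx (P 1 0); rewrite {2}e Psub ?N1 //.
Qed.

Lemma maxPab a b : (a + b = 1)%N -> is_maximal_ideal (P a b).
Proof.
move=> hab; have aN : (a <= N)%N by have := N1; lia.
have bN : (b <= N)%N by have := N1; lia.
split; first exact: pideal_ideal.
split; first by rewrite one_H memP //; lia.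
move=> J /idealP [k [l [kN lN ->]]]; rewrite Psub // => /andP[ka lb].
have [[-> ->]|[-> ->]] : (k = a /\ l = b) \/ (k = 0 /\ l = 0)%N by lia.
  by left.
by right; rewrite P00.
Qed.

Lemma maxP (I : {set S}) : is_maximal_ideal I <-> I = P 1 0 \/ I = P 0 1.
Proof.
split; last by case=> ->; apply: maxPab.
case=> /idealP [i [j [iN jN IE]]] [I1 Imax].
have ij := I1; rewrite IE one_H memP // in ij.
have ab : forall a b, (a + b = 1)%N -> (a <= i)%N -> (b <= j)%N -> I = P a b.
  move=> a b hab ai bj.
  have aN : (a <= N)%N by have := N1; lia.
  have bN : (b <= N)%N by have := N1; lia.
  case: (Imax (P a b) (pideal_ideal _)); first by rewrite IE Psub // ai bj.
    by [].
  move=> e; have := in_setT (1 : S); rewrite -e one_H memP //; lia.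
case: (posnP i) => [i0|ip].
  by right; apply: ab => //; move: ij; rewrite i0 /=; lia.
by left; apply: ab.
Qed.

Lemma nilP (z : S) : nilpotent z <-> z \in P 1 1.
Proof.
have N1' := N1.
rewrite /P (L1 f_monic f_size1) ?HdvdF //.
split.
  case=> n zn.
  have : val (in_qpoly f (val z ^+ n) : S) = 0.
    by rewrite in_exp (in_val f_monic f_size1) zn.
  rewrite val_in ?f_monic ?f_size1 // => /modp_eq0P fz.
  have h1z : hh gamma %| val z.
    apply: (irr_dvd_exp (irr_hh gamma_n0)) (dvdp_trans _ fz).
    by rewrite -H10 HdvdF.
  have gn : - gamma != 0 by rewrite oppr_eq0 gamma_n0.
  have h2z : hh (- gamma) %| val z.
    apply: (irr_dvd_exp (irr_hh gn)) (dvdp_trans _ fz).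
    by rewrite -H01 HdvdF.
  by rewrite /H !expr1 Gauss_dvdp ?cop12 // h1z h2z.
move=> hz; exists N.
rewrite -(in_val f_monic f_size1 z) -in_exp -(divpK hz) exprMn.
have -> : H 1 1 ^+ N = f by rewrite fE /H !expr1 exprMn.
by rewrite in_qpolyM' in_f ?f_monic ?f_size1 // mulr0.
Qed.

Lemma unitP (z : S) : z \isn't a GRing.unit <-> z \in P 1 0 :|: P 0 1.
Proof.
have N1' := N1.
have gn : - gamma != 0 by rewrite oppr_eq0 gamma_n0.
rewrite (unitE f_monic f_size1) in_setU /P !(L1 f_monic f_size1) ?HdvdF // H10 H01.
move: (val z) => x.
rewrite fE /H coprimepMl !coprimep_pexpl ?Npos //.
rewrite !irreducible_poly_coprime.
rewrite negb_and !negbK; try by split.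
all: by apply: irr_hh; rewrite ?oppr_eq0 gamma_n0.
Qed.

End Spec.
Set Implicit Arguments.
Unset Implicit Arguments.
Theorem proposition3p4 (F : finFieldType) (p m s : nat)
  (alpha alpha0 gamma : F) :
  prime p -> odd p -> (0 < m)%N -> (0 < s)%N ->
  #|F| = (p ^ m)%N -> (p ^ m %% 4 = 3)%N ->
  alpha != 0 -> ~ (exists b : F, b ^+ 2 = alpha) ->
  alpha0 ^+ (p ^ s) = alpha ->
  gamma ^+ 4 + 4%:R * alpha0 = 0 ->
  let f := modpoly p s alpha in
  let g1 : fqpoly f :=
    in_qpoly f ('X^2 + gamma *: 'X + (gamma ^+ 2 / 2%:R)%:P) in
  let g2 : fqpoly f :=
    in_qpoly f ('X^2 - gamma *: 'X + (gamma ^+ 2 / 2%:R)%:P) in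
  (* (a) exactly two maximal ideals, <g1> and <g2> *)
  [/\ (pideal g1 != pideal g2 /\
       forall I : {set fqpoly f},
         is_maximal_ideal I <-> (I = pideal g1 \/ I = pideal g2)),
  (* (b) the ideals and their sizes *)
      (forall I : {set fqpoly f},
         is_ideal I <->
         exists i j : nat, [/\ (i <= p ^ s)%N, (j <= p ^ s)%N &
                              I = pideal (g1 ^+ i * g2 ^+ j)]) /\
      (forall i j : nat, (i <= p ^ s)%N -> (j <= p ^ s)%N ->
         #|pideal (g1 ^+ i * g2 ^+ j)| = (p ^ (m * (4 * p ^ s - 2 * i - 2 * j)))%N),
  (* (c) nilradical *)
      (forall z : fqpoly f,
         nilpotent z <-> z \in pideal (in_qpoly f ('X^4 - alpha0%:P) : fqpoly f))
  (* (d) non-units *)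
    & (forall z : fqpoly f,
         z \isn't a GRing.unit <-> z \in pideal g1 :|: pideal g2)].
Proof.
Proof.
move=> pp po m0 sp cF cm an0 na a0 gh f g1 g2.
have eg2 : g2 = in_qpoly f (hh (- gamma)) by rewrite /g2 /hh scaleNr sqrrN.
have eg1 : g1 = in_qpoly f (hh gamma) by [].
have Pij : forall i j, pideal (g1 ^+ i * g2 ^+ j) = P p s alpha gamma i j.
  by move=> i j; rewrite eg1 eg2 gE.
have P10 : pideal g1 = P p s alpha gamma 1 0 by rewrite /P H10.
have P01 : pideal g2 = P p s alpha gamma 0 1 by rewrite /P H01 eg2.
split.
- split; first by rewrite P10 P01 (P_neq pp po sp cF cm an0 a0 gh).
  by move=> I; rewrite P10 P01; exact: (maxP pp po sp cF cm an0 a0 gh).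
- split.
    move=> I; rewrite (idealP pp po sp cF cm an0 a0 gh).
    by split; case=> i [j [a b c]]; exists i, j; split => //; rewrite ?Pij // -Pij.
  move=> i j iN jN; rewrite Pij /P (card_pideal (f_monic _ _ pp) (f_size1 _ _ pp)).
    rewrite f_size // (sizeH _ pp po sp cF cm an0) cF -expnM; rewrite subSS; congr (p ^ (m * _))%N; lia.

  exact: (HdvdF pp po sp cF cm an0 a0 gh).
- move=> z; rewrite -(H11 pp po cF gh); exact: (nilP pp po sp cF cm an0 a0 gh).
- by move=> z; rewrite P10 P01; exact: (unitP pp po sp cF cm an0 a0 gh).
Qed.
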